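(* For $1\le k\le n$ let $U^k=U^{\Phi_k\times\Psi}$ and $\widetilde U^k=U^{\widetilde\Phi_k\times\Psi}$ (so $\widetilde U^k\subset U^k$), and let $F^k$ be the orthogonal complement of $\widetilde U^k$ in $U^k$ (with respect to the standard inner product on $\mathbb{R}^{S_n}$). Then the subspaces $F^k$, $2\le k\le n$, are pairwise orthogonal, and each is orthogonal to the all-ones vector $\mathbf{1}$.
   Context: $S_n$ is the group of permutations of $\{1,\ldots,n\}$. For partitions $\mathcal{R}=(R_i)$, $\mathcal{C}=(C_j)$ of $\{1,\ldots,n\}$, the product partition $\mathcal{B}=\mathcal{R}\times\mathcal{C}=(R_i\times C_j)$ has marginal $|\pi_{\mathcal{B}}|=(t_{ij})$, $t_{ij}=|\{s:(s,\pi(s))\in R_i\times C_j\}|$; $U^{\mathcal{B}}=\{v\in\mathbb{R}^{S_n}: |\pi_{\mathcal{B}}|=|\sigma_{\mathcal{B}}|\Rightarrow v(\pi)=v(\sigma)\}$. Bold sections: $\Phi_k=(\{1,\ldots,k-1\},\{k\},\{k+1,\ldots,n\})$, $1\le k\le n$ (empty blocks omitted). Thin sections: $\widetilde\Phi_k=(\{1,\ldots,k\},\{k+1,\ldots,n\})$ for $1\le k\le n-1$, and $\widetilde\Phi_n=(\{1,\ldots,n\})$. Full partition: $\Psi=(\{1\},\ldots,\{n\})$. *)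

(* Defs.v *)
From HB Require Import structures.
From mathcomp Require Import all_boot all_order all_algebra all_fingroup.
Set Implicit Arguments. Unset Strict Implicit. Unset Printing Implicit Defensive.
Import Order.TTheory GRing.Theory Num.Theory.

(* Points {1,...,n} are represented by 'I_n = {0,...,n-1}: s : 'I_n stands for
   the paper's point s+1.  S_n is 'S_n = {perm 'I_n}.
   A partition of {1..n} is represented by a block-labelling function
   'I_n -> nat (blocks = nonempty fibres; empty blocks are thus automatically
   omitted). *)

Definition partition_lab (n : nat) := 'I_n -> nat.

Definition marginal (n : nat) (Rl Cl : partition_lab n) (pi : 'S_n) (i j : nat) : nat :=
  #|[set s : 'I_n | (Rl s == i) && (Cl (pi s) == j)]|.

Definition inU (R : realFieldType) (n : nat) (Rl Cl : partition_lab n)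
  (v : 'S_n -> R) : Prop :=
  forall pi sigma : 'S_n,
    (forall i j, marginal Rl Cl pi i j = marginal Rl Cl sigma i j) ->
    v pi = v sigma.

Definition dotS (R : realFieldType) (n : nat) (v w : 'S_n -> R) : R :=
  \sum_(pi : 'S_n) v pi * w pi.

(* Bold section Phi_k = ({1..k-1},{k},{k+1..n}) *)
Definition Phi (n k : nat) : partition_lab n :=
  fun s => if (s.+1 < k)%N then 0%N else if s.+1 == k then 1%N else 2%N.

(* Thin section tilde Phi_k = ({1..k},{k+1..n})  (for k = n: a single block) *)
Definition Phit (n k : nat) : partition_lab n :=
  fun s => if (s.+1 <= k)%N then 0%N else 1%N.

Definition Psi (n : nat) : partition_lab n := fun s => nat_of_ord s.

Definition inUk (R : realFieldType) (n k : nat) (v : 'S_n -> R) : Prop :=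
  @inU R n (@Phi n k) (@Psi n) v.
Definition inUtk (R : realFieldType) (n k : nat) (v : 'S_n -> R) : Prop :=
  @inU R n (@Phit n k) (@Psi n) v.

Definition inF (R : realFieldType) (n k : nat) (v : 'S_n -> R) : Prop :=
  @inUk R n k v /\ (forall w : 'S_n -> R, @inUtk R n k w -> @dotS R n v w = 0%R).

(* Main.v *)
Require Import Defs.
From HB Require Import structures.
From mathcomp Require Import all_boot all_order all_algebra all_fingroup.
Import Order.TTheory GRing.Theory Num.Theory.
Local Open Scope ring_scope.

Section Aux.
Variable n : nat.

Lemma marg_inv (Rl Cl : partition_lab n) (h pi : 'S_n) :
  (forall s, Rl (h s) = Rl s) ->
  forall i j, marginal Rl Cl (h * pi)%g i j = marginal Rl Cl pi i j.
Proof.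
move=> Hh i j; rewrite /marginal.
have -> : [set s | (Rl s == i) && (Cl ((h * pi)%g s) == j)] =
          h @^-1: [set t | (Rl t == i) && (Cl (pi t) == j)].
  by apply/setP => s; rewrite !inE permM Hh.
by rewrite card_preimset //; exact: perm_inj.
Qed.

Lemma inv_of_inU {R : realFieldType} {Rl : partition_lab n} {f : 'S_n -> R} :
  inU Rl (@Psi n) f -> forall h pi : 'S_n,
  (forall s, Rl (h s) = Rl s) -> f (h * pi)%g = f pi.
Proof. move=> Hf h pi Hh; apply: Hf => i j; exact: marg_inv. Qed.

Lemma inU_of_inv {R : realFieldType} {Rl : partition_lab n} {f : 'S_n -> R} :
  (forall h pi : 'S_n, (forall s, Rl (h s) = Rl s) -> f (h * pi)%g = f pi) ->
  inU Rl (@Psi n) f.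
Proof.
move=> Hf pi sigma M.
have Hg : forall s, Rl ((sigma * pi^-1)%g s) = Rl s.
  move=> s.
  have : (0 < marginal Rl (@Psi n) sigma (Rl s) (sigma s))%N.
    by rewrite /marginal card_gt0; apply/set0Pn; exists s; rewrite inE !eqxx.
  rewrite -M /marginal card_gt0 => /set0Pn [t]; rewrite inE /Psi.
  move=> /andP [/eqP Ht /eqP Hpt].
  have -> : (sigma * pi^-1)%g s = t by rewrite permM -(val_inj Hpt) permK.
  by rewrite Ht.
by rewrite -(Hf _ pi Hg) mulgKV.
Qed.

Definition setB (k : nat) : {set 'S_n} :=
  [set b : 'S_n | [forall s : 'I_n, (s < k)%N ==> (b s == s)]].

Lemma inBP k c : c \in setB k -> forall s : 'I_n, (s < k)%N -> c s = s.
Proof. rewrite inE => /forallP H s hs; apply/eqP; exact: (implyP (H s) hs). Qed.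

Lemma setBM k b b0 : b0 \in setB k -> ((b * b0)%g \in setB k) = (b \in setB k).
Proof.
move=> /inBP H0; rewrite !inE; apply/forallP/forallP => H s; apply/implyP => hs;
  move: (implyP (H s) hs); rewrite ?permM => /eqP e.
  by apply/eqP; apply: (perm_inj (s:=b0)); rewrite e H0.
by rewrite e H0.
Qed.

Lemma fixlt_ge k (b : 'S_n) : (forall s : 'I_n, (s < k)%N -> b s = s) ->
  forall s : 'I_n, (k <= b s)%N = (k <= s)%N.
Proof.
move=> Hb s; case: (ltnP s k) => hs; first by rewrite Hb // leqNgt hs.
rewrite leqNgt; apply/negP => hbs.
have e := perm_inj (Hb _ hbs).
by rewrite e ltnNge hs in hbs.
Qed.

Lemma fixge_lt k (a : 'S_n) : (forall s : 'I_n, (k <= s)%N -> a s = s) ->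
  forall s : 'I_n, (a s < k)%N = (s < k)%N.
Proof.
move=> Ha s; case: (ltnP s k) => hs; last by rewrite Ha // ltnNge hs.
rewrite ltnNge; apply/negP => hbs.
have e := perm_inj (Ha _ hbs).
by rewrite e leqNgt hs in hbs.
Qed.

Lemma Phi_ge k (s : 'I_n) : (k <= s)%N -> @Phi n k s = 2%N.
Proof.
move=> hs; rewrite /Phi ifF; last by rewrite ltnNge leqW.
by rewrite ifF // gtn_eqF // ltnS.
Qed.

Lemma Phi_lt l (s : 'I_n) : (s.+1 < l)%N -> @Phi n l s = 0%N.
Proof. by move=> hs; rewrite /Phi hs. Qed.

Lemma commAB k (a c : 'S_n) : (forall s : 'I_n, (k <= s)%N -> a s = s) ->
  c \in setB k -> (a * c = c * a)%g.
Proof.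
move=> Ha /inBP Hc; apply/permP => x; rewrite !permM.
case: (ltnP x k) => hx.
  have hax : (a x < k)%N by rewrite fixge_lt.
  by rewrite (Hc _ hx) (Hc _ hax).
have hcx : (k <= c x)%N by rewrite fixlt_ge.
by rewrite (Ha _ hx) (Ha _ hcx).
Qed.

Lemma key (R : realFieldType) k l (v w : 'S_n -> R) :
  (k < l)%N -> inF k v -> inUk l w -> dotS v w = 0.
Proof.
move=> kl [Uv Ov] Uw; rewrite /inUk in Uv Uw.
set B := setB k.
pose w2 := fun pi : 'S_n => \sum_(b in B) w (b * pi)%g.
have vB : forall b pi, b \in B -> v (b * pi)%g = v pi.
  move=> b pi /inBP Hb. apply: (inv_of_inU Uv) => s.
  case: (ltnP s k) => hs; first by rewrite Hb.
  by rewrite !Phi_ge // fixlt_ge.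
have wA : forall a pi : 'S_n, (forall s : 'I_n, (k <= s)%N -> a s = s) ->
    w (a * pi)%g = w pi.
  move=> a pi Ha; apply: (inv_of_inU Uw) => s.
  case: (ltnP s k) => hs; last by rewrite Ha.
  have has : (a s < k)%N by rewrite fixge_lt.
  by rewrite !Phi_lt //; apply: leq_ltn_trans kl.
have Uw2 : inUtk k w2.
  rewrite /inUtk; apply: inU_of_inv => g pi Hg.
  have Hg' : forall s : 'I_n, (g s < k)%N = (s < k)%N.
    by move=> s; move: (Hg s); rewrite /Phit; do 2 case: ifP.
  have binj : injective (fun s : 'I_n => if (s < k)%N then s else g s).
    move=> x y /=; case: (ltnP x k) => hx; case: (ltnP y k) => hy //.
    - by move=> e; have := Hg' y; rewrite -e hx ltnNge hy.
    - by move=> e; have := Hg' x; rewrite e hy ltnNge hx.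
    - exact: perm_inj.
  pose b := perm binj.
  have bB : b \in B by rewrite inE; apply/forallP => s; apply/implyP => hs;
    rewrite permE /= hs.
  pose a := (g * b^-1)%g.
  have Ha : forall s : 'I_n, (k <= s)%N -> a s = s.
    move=> s hs; rewrite permM; apply: (perm_inj (s:=b)).
    by rewrite permKV permE /= ltnNge hs.
  have -> : (g * pi = a * (b * pi))%g by rewrite /a mulgA mulgKV.
  rewrite /w2.
  transitivity (\sum_(c in B) w (c * (b * pi))%g).
    apply: eq_bigr => c cB.
    by rewrite (mulgA c a) -(@commAB k _ _ Ha cB) -mulgA wA.
  rewrite [RHS](reindex_inj (mulIg b)) /=.
  by apply: eq_big => [c|c _]; [rewrite setBM | rewrite mulgA].
have E : dotS v w2 = (#|B|%:R) * dotS v w.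
  rewrite /dotS /w2.
  under eq_bigr do rewrite mulr_sumr.
  rewrite exchange_big /=.
  rewrite (eq_bigr (fun _ => \sum_pi v pi * w pi)); last first.
    move=> b bB; rewrite [RHS](reindex_inj (mulgI b)) /=.
    by apply: eq_bigr => pi _; rewrite vB.
  by rewrite sumr_const mulr_natl.
have : (#|B|%:R : R) != 0.
  rewrite pnatr_eq0 -lt0n card_gt0; apply/set0Pn; exists 1%g.
  by rewrite inE; apply/forallP => s; rewrite perm1 eqxx implybT.
move=> nz; move: E; rewrite (Ov _ Uw2) => /esym /eqP.
by rewrite mulf_eq0 (negbTE nz) /= => /eqP.
Qed.

End Aux.

Theorem lemma5 (R : realFieldType) (n : nat) :
  (forall (k l : nat), (2 <= k <= n)%N -> (2 <= l <= n)%N -> k != l ->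
     forall v w : 'S_n -> R, @inF R n k v -> @inF R n l w -> dotS v w = 0) /\
  (forall k : nat, (2 <= k <= n)%N ->
     forall v : 'S_n -> R, @inF R n k v -> dotS v (fun _ => 1) = 0).
Proof.
split.
  move=> k l _ _ kl v w Fv Fw.
  case: (ltngtP k l) => h.
  - exact: (@key n R k l v w h Fv Fw.1).
  - have H := @key n R l k w v h Fw Fv.1; rewrite /dotS in H *.
    rewrite -[RHS]H; apply: eq_bigr => pi _; exact: mulrC.
  - by rewrite h eqxx in kl.
move=> k _ v [_ Ov]; apply: Ov => pi sigma _; done.
Qed.
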